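(* Let $\ell:\mathbb{R}^{m\times n}\to\mathbb{R}$ be differentiable and $L$-smooth with respect to the Frobenius norm, and suppose $\|\nabla \ell(W)\|_F\le G$ for all $W$. Let $U_r\in\mathbb{R}^{m\times r}$ have orthonormal columns and let $\Pi_{U_r}=U_rU_r^\top$ be the fixed rank-$r$ orthogonal projector. Fix a step size $\eta>0$ and an initial matrix $W_0\in\mathbb{R}^{m\times n}$. Define the unprojected gradient descent path $Z_0=W_0$, $Z_{t+1}=Z_t-\eta\nabla \ell(Z_t)$; the accumulated-projection iterate \[ W_T = W_0 - \eta\,\Pi_{U_r}\Bigl(\sum_{t=0}^{T-1}\nabla \ell(Z_t)\Bigr); \] and the sequential-projection iterates $P_0=W_0$, $P_{t+1}=P_t-\eta\,\Pi_{U_r}\nabla \ell(P_t)$. Then for any $T$, \[ \|W_T-P_T\|_F \le \frac{\eta^2}{2}\,L G\,T(T-1) + O\bigl((\eta L T)^3\bigr). \]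
   Context: A differentiable function $\ell:\mathbb{R}^{m\times n}\to\mathbb{R}$ is $L$-smooth with respect to the Frobenius norm $\|\cdot\|_F$ if $\|\nabla \ell(W_1)-\nabla \ell(W_2)\|_F \le L\,\|W_1-W_2\|_F$ for all $W_1,W_2\in\mathbb{R}^{m\times n}$. The term $O((\eta L T)^3)$ denotes a higher-order remainder as $\eta L T\to 0$. *)

(* Defs.v *)
From HB Require Import structures.
From mathcomp Require Import all_boot all_order all_algebra.
From mathcomp Require Import reals.
Set Implicit Arguments. Unset Strict Implicit. Unset Printing Implicit Defensive.
Import Order.TTheory GRing.Theory Num.Theory.
Local Open Scope ring_scope.

Section Defs.
Variables (R : realType) (m n r : nat).

Definition frob_inner (A B : 'M[R]_(m, n)) : R :=
  \sum_(i < m) \sum_(j < n) A i j * B i j.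
Definition frob (A : 'M[R]_(m, n)) : R := Num.sqrt (frob_inner A A).

Definition is_gradient (ell : 'M[R]_(m, n) -> R) (grad : 'M[R]_(m, n) -> 'M[R]_(m, n)) :=
  forall W (eps : R), 0 < eps -> exists2 delta : R, 0 < delta &
    forall H, frob H < delta ->
      `| ell (W + H) - ell W - frob_inner (grad W) H | <= eps * frob H.

Definition L_smooth (grad : 'M[R]_(m, n) -> 'M[R]_(m, n)) (L : R) :=
  forall W1 W2, frob (grad W1 - grad W2) <= L * frob (W1 - W2).

Definition proj (U : 'M[R]_(m, r)) (X : 'M[R]_(m, n)) : 'M[R]_(m, n) :=
  U *m U^T *m X.

Fixpoint gd_path (grad : 'M[R]_(m, n) -> 'M[R]_(m, n)) (eta : R) (W0 : 'M[R]_(m, n))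
    (t : nat) : 'M[R]_(m, n) :=
  match t with
  | 0 => W0
  | t'.+1 => gd_path grad eta W0 t' - eta *: grad (gd_path grad eta W0 t')
  end.

Definition acc_proj_iter (grad : 'M[R]_(m, n) -> 'M[R]_(m, n)) (U : 'M[R]_(m, r))
    (eta : R) (W0 : 'M[R]_(m, n)) (T : nat) : 'M[R]_(m, n) :=
  W0 - eta *: proj U (\sum_(t < T) grad (gd_path grad eta W0 t)).

Fixpoint seq_proj_iter (grad : 'M[R]_(m, n) -> 'M[R]_(m, n)) (U : 'M[R]_(m, r))
    (eta : R) (W0 : 'M[R]_(m, n)) (t : nat) : 'M[R]_(m, n) :=
  match t with
  | 0 => W0
  | t'.+1 => seq_proj_iter grad U eta W0 t'
             - eta *: proj U (grad (seq_proj_iter grad U eta W0 t'))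
  end.

End Defs.

(* Main.v *)
Require Import Defs.
From HB Require Import structures.
From mathcomp Require Import all_boot all_order all_algebra.
From mathcomp Require Import reals.
From mathcomp Require Import ring lra.
Import Order.TTheory GRing.Theory Num.Theory.
Local Open Scope ring_scope.

Set Implicit Arguments.
Section Frob.
Variables (R : realType) (m n : nat).
Local Notation M := 'M[R]_(m, n).
Local Notation fi := (@frob_inner R m n).
Local Notation fr := (@frob R m n).

Lemma fiC (A B : M) : fi A B = fi B A.
Proof. by rewrite /frob_inner; apply: eq_bigr => i _; apply: eq_bigr => j _; rewrite mulrC. Qed.

Lemma fiDl (A B C : M) : fi (A + B) C = fi A C + fi B C.
Proof.
rewrite /frob_inner -big_split; apply: eq_bigr => i _.
rewrite -big_split; apply: eq_bigr => j _; by rewrite mxE mulrDl.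
Qed.

Lemma fiZl a (A B : M) : fi (a *: A) B = a * fi A B.
Proof.
rewrite /frob_inner mulr_sumr; apply: eq_bigr => i _.
rewrite mulr_sumr; apply: eq_bigr => j _; by rewrite mxE mulrA.
Qed.

Lemma fiNl (A B : M) : fi (- A) B = - fi A B.
Proof. by rewrite -scaleN1r fiZl mulN1r. Qed.

Lemma fiDr (A B C : M) : fi C (A + B) = fi C A + fi C B.
Proof. by rewrite fiC fiDl !(fiC C). Qed.
Lemma fiZr a (A B : M) : fi B (a *: A) = a * fi B A.
Proof. by rewrite fiC fiZl fiC. Qed.
Lemma fiNr (A B : M) : fi B (- A) = - fi B A.
Proof. by rewrite fiC fiNl fiC. Qed.

Lemma fi_ge0 (A : M) : 0 <= fi A A.
Proof.
apply: sumr_ge0 => i _; apply: sumr_ge0 => j _; by rewrite -expr2 sqr_ge0.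
Qed.

Lemma fi0 (A : M) : fi A A = 0 -> A = 0.
Proof.
move=> h; apply/matrixP => i j; rewrite mxE.
have mul_self_ge0 : forall x : R, 0 <= x * x by move=> x; rewrite -expr2 sqr_ge0.
have h1 : \sum_(j < n) A i j * A i j = 0.
  move: h; rewrite /frob_inner; move/psumr_eq0P; apply => // k _.
  by apply: sumr_ge0 => l _.
have h2 : A i j * A i j = 0.
  by move: h1; move/psumr_eq0P; apply.
by move/eqP: h2; rewrite mulf_eq0 orbb => /eqP.
Qed.

Lemma fr_ge0 (A : M) : 0 <= fr A.
Proof. exact: sqrtr_ge0. Qed.

Lemma fr_sq (A : M) : fr A ^+ 2 = fi A A.
Proof. by rewrite sqr_sqrtr // fi_ge0. Qed.

Lemma fi_cs (A B : M) : fi A B <= fr A * fr B.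
Proof.
have [a0|a0] := eqVneq (fi A A) 0.
  rewrite (fi0 a0) -(scale0r 0) fiZl mul0r.
  by apply: mulr_ge0; apply: fr_ge0.
have apos : 0 < fi A A by rewrite lt_def a0 fi_ge0.
have h := fi_ge0 (fi A A *: B - fi A B *: A).
rewrite !(fiDl, fiDr, fiNl, fiNr, fiZl, fiZr) (fiC B A) in h.
have hc : fi A B ^+ 2 <= fi A A * fi B B.
  have hb := fi_ge0 B. nra.
rewrite /frob -sqrtrM ?fi_ge0 //.
apply: (le_trans (ler_norm _)); rewrite -sqrtr_sqr; exact: ler_wsqrtr.
Qed.

Lemma frD (A B : M) : fr (A + B) <= fr A + fr B.
Proof.
have h := fi_cs A B.
have e : fi (A + B) (A + B) <= (fr A + fr B) ^+ 2.
  rewrite !(fiDl, fiDr) (fiC B A) sqrrD !fr_sq. lra.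
rewrite /frob; apply: (le_trans (ler_wsqrtr e)).
by rewrite sqrtr_sqr ger0_norm // addr_ge0 // fr_ge0.
Qed.

Lemma frZ a (A : M) : fr (a *: A) = `|a| * fr A.
Proof.
by rewrite /frob fiZl fiZr mulrA -expr2 sqrtrM ?sqr_ge0 // sqrtr_sqr.
Qed.

Lemma frN (A : M) : fr (- A) = fr A.
Proof. by rewrite -scaleN1r frZ normrN normr1 mul1r. Qed.

Lemma frB (A B : M) : fr (A - B) <= fr A + fr B.
Proof. by rewrite -(frN B); apply: frD. Qed.

Lemma fr0 : fr 0 = 0.
Proof. by rewrite -(scale0r 0) frZ normr0 mul0r. Qed.

Lemma fi_tr (A B : M) : fi A B = \tr (A^T *m B).
Proof.
rewrite /frob_inner /mxtrace exchange_big; apply: eq_bigr => j _.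
rewrite !mxE; apply: eq_bigr => i _; by rewrite !mxE.
Qed.

Variables (r : nat) (U : 'M[R]_(m, r)).
Hypothesis hU : U^T *m U = 1%:M.

Lemma proj_sym (X Y : M) : fi (proj U X) Y = fi X (proj U Y).
Proof.
rewrite !fi_tr /proj !trmx_mul trmxK !mulmxA. done.
Qed.

Lemma proj_idem (X : M) : proj U (proj U X) = proj U X.
Proof. by rewrite /proj !mulmxA -(mulmxA U _ U) hU mulmx1. Qed.

Lemma projB (X Y : M) : proj U (X - Y) = proj U X - proj U Y.
Proof. by rewrite /proj mulmxBr. Qed.

Lemma projD (X Y : M) : proj U (X + Y) = proj U X + proj U Y.
Proof. by rewrite /proj mulmxDr. Qed.

Lemma projZ a (X : M) : proj U (a *: X) = a *: proj U X.
Proof. by rewrite /proj scalemxAr. Qed.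

Lemma proj_pyth (X : M) :
  fi X X = fi (proj U X) (proj U X) + fi (X - proj U X) (X - proj U X).
Proof.
have o : fi (proj U X) (X - proj U X) = 0.
  by rewrite proj_sym projB proj_idem subrr -(scale0r 0) fiZr mul0r.
have o' : fi (X - proj U X) (proj U X) = 0 by rewrite fiC.
have e : X = proj U X + (X - proj U X) by rewrite addrC subrK.
rewrite {1 2}e.
move: o o'; move: (proj U X) (X - proj U X) => P Y o o'.
by rewrite !(fiDl, fiDr) o o' addr0 add0r.
Qed.

Lemma proj_le (X : M) : fr (proj U X) <= fr X.
Proof.
rewrite /frob; apply: ler_wsqrtr; rewrite [leRHS]proj_pyth lerDl; exact: fi_ge0.
Qed.

Lemma projC_le (X : M) : fr (X - proj U X) <= fr X.
Proof.
rewrite /frob; apply: ler_wsqrtr; rewrite [leRHS]proj_pyth lerDr; exact: fi_ge0.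
Qed.

End Frob.
Unset Implicit Arguments.

Lemma subsub (M : zmodType) (z a p b : M) : (z - a) - (p - b) = (z - p) - (a - b).
Proof. rewrite !opprB addrACA [RHS]addrACA; congr (_ + _); exact: addrC. Qed.
Lemma subsub2 (M : zmodType) (w a b p c : M) : (w - (a + b)) - (p - c) = (w - a - p) - (b - c).
Proof. by rewrite opprD addrA subsub. Qed.

Theorem theorem2 (R : realType) (m n r : nat)
    (ell : 'M[R]_(m, n) -> R) (grad : 'M[R]_(m, n) -> 'M[R]_(m, n))
    (L G : R) (U : 'M[R]_(m, r)) (W0 : 'M[R]_(m, n)) :
  is_gradient ell grad ->
  0 <= L ->
  L_smooth grad L ->
  (forall W, frob (grad W) <= G) ->
  U^T *m U = 1%:M ->
  exists (C delta : R), 0 < delta /\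
    forall (eta : R) (T : nat), 0 < eta -> eta * L * T%:R <= delta ->
      frob (acc_proj_iter grad U eta W0 T - seq_proj_iter grad U eta W0 T)
      <= eta ^+ 2 / 2 * L * G * (T%:R * (T%:R - 1)) + C * (eta * L * T%:R) ^+ 3.
Proof.
move=> _ L0 Lsm Gb hU.
have G0 : 0 <= G by apply: le_trans (Gb W0); apply: fr_ge0.
exists (2 * G / L), 1; split => // eta T eta0 _.
have e0 := ltW eta0.
pose Z := gd_path grad eta W0.
pose P := seq_proj_iter grad U eta W0.
pose e t := frob (Z t - P t).
have ege0 : forall t, 0 <= e t by move=> t; apply: fr_ge0.
have stepD : forall t, Z t.+1 - P t.+1 =
    (Z t - P t) - eta *: (grad (Z t) - proj U (grad (P t))).
  by move=> t; rewrite /Z /P /= scalerBr subsub.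
have key : forall t, frob (grad (Z t) - proj U (grad (P t))) <= G + L * e t.
  move=> t.
  have -> : grad (Z t) - proj U (grad (P t)) =
     (grad (Z t) - proj U (grad (Z t))) + proj U (grad (Z t) - grad (P t)).
    by rewrite projB addrA subrK.
  apply: le_trans; first exact: frD. apply: lerD.
    by apply: le_trans (projC_le hU _) (Gb _).
  by apply: le_trans (proj_le hU _) (Lsm _ _).
have crude : forall t, frob (grad (Z t) - proj U (grad (P t))) <= G + G.
  move=> t; apply: le_trans; first exact: frB; apply: lerD => //.
  by apply: le_trans (proj_le hU _) (Gb _).
have rec : forall t, e t.+1 <= e t + eta * frob (grad (Z t) - proj U (grad (P t))).
  move=> t; rewrite /e stepD; apply: le_trans; first exact: frB.
  by rewrite frZ ger0_norm.
have clA : forall t, e t <= 2 * eta * G * t%:R.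
  elim=> [|t IH]; first by rewrite /e /= subrr fr0 mulr0.
  apply: (le_trans (rec t)); rewrite -natr1.
  have := crude t; have := ege0 t => h1 h2. nra.
have clB : forall t, e t <= eta * G * t%:R + 2 * eta ^+ 2 * L * G * t%:R ^+ 2.
  elim=> [|t IH]; first by rewrite /e /= subrr fr0 (_ : (0%:R : R) = 0) // expr0n /= !mulr0 addr0.
  apply: (le_trans (rec t)); rewrite -natr1.
  have hk := key t.
  have hA := ler_wpM2l (mulr_ge0 e0 L0) (clA t).
  have ht : (0:R) <= t%:R by [].
  have hk' := ler_wpM2l e0 hk.
  have hpos : 0 <= eta ^+ 2 * L * G * (t%:R + 1).
    by apply: mulr_ge0; [apply: mulr_ge0 => //; apply: mulr_ge0 => //; apply: exprn_ge0 | lra].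
  rewrite mulrDr in hk'. lra.
pose F t := acc_proj_iter grad U eta W0 t - P t.
have stepF : forall t, F t.+1 = F t - eta *: proj U (grad (Z t) - grad (P t)).
  move=> t; rewrite [in RHS]projB [in RHS]scalerBr /F /acc_proj_iter big_ord_recr /= projD scalerDr.
  by rewrite subsub2.
have clC : forall t, frob (F t) <= eta ^+ 2 * L * G * (t%:R * (t%:R - 1)) / 2
                 + 2 * eta ^+ 3 * L ^+ 2 * G * t%:R ^+ 3.
  elim=> [|t IH].
    by rewrite /F /acc_proj_iter /= big_ord0 /proj mulmx0 scaler0 subr0 subrr fr0 (_ : (0%:R : R) = 0) // expr0n /= !(mulr0, mul0r) addr0.
  rewrite stepF; apply: le_trans; first exact: frB; rewrite frZ ger0_norm //.
  have hp : frob (proj U (grad (Z t) - grad (P t))) <= L * e t.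
    by apply: le_trans (proj_le hU _) (Lsm _ _).
  have hB := clB t.
  have hp' := ler_wpM2l e0 hp.
  have hB' := ler_wpM2l (mulr_ge0 e0 L0) hB.
  rewrite -natr1.
  have ht : (0:R) <= t%:R by [].
  have hG3 : 0 <= eta ^+ 3 * L ^+ 2 * G * (3 * t%:R + 1) by
    apply: mulr_ge0 => //; [apply: mulr_ge0 => //; apply: mulr_ge0; [exact: exprn_ge0| exact: exprn_ge0] | nra].
  nra.
apply: (le_trans (clC T)).
have [->|Ln0] := eqVneq L 0.
  by rewrite !(mulr0, mul0r, expr0n) /= !(mulr0, mul0r, addr0).
have -> : 2 * G / L * (eta * L * T%:R) ^+ 3 = 2 * eta ^+ 3 * L ^+ 2 * G * T%:R ^+ 3.
  by field.
lra.
Qed.
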